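(* If $A\in\widehat{\Omega}[0,1]$, then $x\mapsto\int_0^1A(s)\,dx(s)$ (Riemann–Stieltjes integral) defines a continuous linear functional on $CBV[0,1]$.
   Context: $CBV[0,1]$ denotes the Banach space of continuous real functions of bounded Jordan variation on $[0,1]$ with norm $\|x\|_{BV}=|x(0)|+\operatorname{var}_{[0,1]}x$. For $\varepsilon>0$ and $a<b$, a bounded $A\colon[a,b]\to\mathbb R$ belongs to $\Omega_\varepsilon[a,b]$ if there exists $\delta>0$ such that $\sup_{t\le\tau\le\sigma\le s}|A(\sigma)-A(\tau)|\le\varepsilon$ whenever $t,s\in[a,b]$ and $0\le s-t\le\delta$. $\Omega[0,1]$ is the set of bounded $A\colon[0,1]\to\mathbb R$ such that for every $\varepsilon>0$ there is $a\in(0,1)$ with $A|_{[0,a]}\in\Omega_\varepsilon[0,a]$ and $A|_{[a,1]}$ of bounded variation on $[a,1]$. $\widehat{\Omega}[0,1]=\Omega[0,1]\cup C[0,1]\cup BV[0,1]$. *)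

(* Defs.v *)
From HB Require Import structures.
From mathcomp Require Import all_boot all_order all_algebra.
From mathcomp Require Import all_classical all_reals all_analysis.
Set Implicit Arguments. Unset Strict Implicit. Unset Printing Implicit Defensive.
Import Order.TTheory GRing.Theory Num.Theory.
Import numFieldNormedType.Exports.
Local Open Scope classical_set_scope.
Local Open Scope ring_scope.

Section defs.
Context {R : realType}.
Implicit Types (A x : R -> R) (a b : R).

Definition bounded_on a b A := exists M : R, forall t, a <= t <= b -> `|A t| <= M.

Definition Omega_eps (eps : R) a b A :=
  bounded_on a b A /\
  exists delta : R, 0 < delta /\
    forall t s, a <= t <= b -> a <= s <= b -> 0 <= s - t <= delta ->
      forall tau sigma, t <= tau -> tau <= sigma -> sigma <= s ->
        `|A sigma - A tau| <= eps.

Definition Omega A :=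
  bounded_on 0 1 A /\
  forall eps : R, 0 < eps -> exists a : R, 0 < a < 1 /\
    Omega_eps eps 0 a A /\ bounded_variation a 1 A.

Definition Omega_hat A :=
  Omega A \/ {within `[0, 1], continuous A} \/ bounded_variation 0 1 A.

Definition CBV x := {within `[0, 1], continuous x} /\ bounded_variation 0 1 x.
Definition bv_norm x : R := `|x 0| + fine (total_variation 0 1 x).

(* Riemann--Stieltjes integral on [0,1] (limit w.r.t. the mesh).
   A partition is 0 :: s with itv_partition 0 1 s (0 = p_0 < p_1 < ... < p_n = 1);
   tags xi_i lie in [p_i, p_{i+1}]. *)
Definition pt (s : seq R) (i : nat) : R := nth 1 (0 :: s) i.
Definition mesh (s : seq R) : R := \big[Num.max/0]_(i < size s) (pt s i.+1 - pt s i).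
Definition tags_ok (s xi : seq R) :=
  size xi = size s /\ forall i, (i < size s)%N -> pt s i <= nth 0 xi i <= pt s i.+1.
Definition RS_sum A x (s xi : seq R) : R :=
  \sum_(i < size s) A (nth 0 xi i) * (x (pt s i.+1) - x (pt s i)).
Definition RS_integral_is A x (I : R) :=
  forall eps : R, 0 < eps -> exists delta : R, 0 < delta /\
    forall s xi, itv_partition 0 1 s -> tags_ok s xi -> mesh s < delta ->
      `|RS_sum A x s xi - I| < eps.

End defs.

(* Main.v *)
Require Import Defs.
From HB Require Import structures.
From mathcomp Require Import all_boot all_order all_algebra.
From mathcomp Require Import all_classical all_reals all_analysis.
From mathcomp Require Import ring lra.
Set Implicit Arguments. Unset Strict Implicit. Unset Printing Implicit Defensive.
Import Order.TTheory GRing.Theory Num.Theory.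
Import numFieldNormedType.Exports.
Local Open Scope classical_set_scope.
Local Open Scope ring_scope.

Section core.
Context {R : realType}.
Implicit Types (f g : R -> R) (c d eps : R).


Fixpoint rs f g c (ts : seq (R * R)) : R :=
  if ts is (p, xi) :: ts' then f xi * (g p - g c) + rs f g p ts' else 0.
Fixpoint av g c (m : seq R) : R :=
  if m is p :: m' then `|g p - g c| + av g p m' else 0.
Fixpoint close d c (ts : seq (R * R)) : Prop :=
  if ts is (p, xi) :: ts' then
    ((0 <= xi <= 1) /\ forall u, c <= u <= p -> `|xi - u| <= d) /\ close d p ts'
  else True.

Lemma path_le_last c (m : seq R) : path <=%R c m -> c <= last c m.
Proof.
elim: m c => //= p m IH c /andP[cp pm]; exact: le_trans cp (IH _ pm).
Qed.

Lemma rs_zero f g c ts : path <=%R c (map fst ts) -> last c (map fst ts) = c ->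
  rs f g c ts = 0.
Proof.
elim: ts c => [//|[p xi] ts IH] c /= /andP[cp pts] lst.
have pc : p <= c by rewrite -lst; exact: path_le_last.
have ep : p = c by apply/eqP; rewrite eq_le pc cp.
subst p; by rewrite subrr mulr0 add0r IH.
Qed.

Definition KLP f g eps d n := forall ts us c,
  (size ts + size us <= n)%N ->
  path <=%R c (map fst ts) -> path <=%R c (map fst us) ->
  last c (map fst ts) = last c (map fst us) ->
  close d c ts -> close d c us ->
  exists m, [/\ path <=%R c m, last c m = last c (map fst ts) &
     `|rs f g c ts - rs f g c us| <= eps * av g c m].

Lemma kl_step f g eps d n :
  (forall t s, 0 <= t <= 1 -> 0 <= s <= 1 -> `|t - s| <= d + d -> `|f t - f s| <= eps) ->
  0 <= eps -> KLP f g eps d n ->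
  forall x xi ts y eta us c, x <= y ->
  (size ts + size us < n)%N ->
  path <=%R c (map fst ((x, xi) :: ts)) -> path <=%R c (map fst ((y, eta) :: us)) ->
  last c (map fst ((x, xi) :: ts)) = last c (map fst ((y, eta) :: us)) ->
  close d c ((x, xi) :: ts) -> close d c ((y, eta) :: us) ->
  exists m, [/\ path <=%R c m, last c m = last c (map fst ((x, xi) :: ts)) &
     `|rs f g c ((x, xi) :: ts) - rs f g c ((y, eta) :: us)| <= eps * av g c m].
Proof.
move=> osc e0 IH x xi ts y eta us c xy sz /= /andP[cx pts] /andP[cy pus] lst
  [[xi01 clx] clts] [[eta01 cly] clus].
have : exists m, [/\ path <=%R x m, last x m = last x (map fst ts) &
     `|rs f g x ts - rs f g x ((y, eta) :: us)| <= eps * av g x m].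
  apply: IH => //=.
  - by rewrite addnS.
  - by rewrite xy pus.
  - split => //; split => // u /andP[xu uy]; apply: cly; by rewrite uy (le_trans cx xu).
case=> m [pm lm bm].
exists (x :: m); split => //=; first by rewrite cx.
have -> : f eta * (g y - g c) + rs f g y us =
  f eta * (g x - g c) + (f eta * (g y - g x) + rs f g y us) by ring.
have -> : forall a b u v : R, a + b - (u + v) = (a - u) + (b - v) by move=> *; ring.
apply: (le_trans (ler_normD _ _)); rewrite [in leRHS]mulrDr; apply: lerD => //.
rewrite -mulrBl normrM ler_wpM2r //; apply: osc => //.
have h1 := clx c; have h2 := cly c.
rewrite (_ : xi - eta = (xi - c) + (c - eta)); last by ring.
apply: (le_trans (ler_normD _ _)); apply: lerD.
  by apply: h1; rewrite lexx cx.
by rewrite distrC; apply: h2; rewrite lexx cy.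
Qed.

Lemma kl f g eps d :
  (forall t s, 0 <= t <= 1 -> 0 <= s <= 1 -> `|t - s| <= d + d -> `|f t - f s| <= eps) ->
  0 <= eps -> forall n, KLP f g eps d n.
Proof.
move=> osc e0; elim=> [|n IH].
  move=> [|//] [|//] c _ _ _ _ _ _; exists [::]; split => //=.
  by rewrite subrr normr0 mulr0.
move=> [|[x xi] ts] us c sz pt pu lst ct cu.
  exists [::]; split => //=; rewrite (@rs_zero f g c us) //.
  by rewrite subrr normr0 mulr0.
case: us sz pu lst cu => [|[y eta] us] sz pu lst cu.
  exists [::]; split => //=.
  have z := @rs_zero f g c ((x, xi) :: ts) pt lst.
  by move: z => /= ->; rewrite subrr normr0 mulr0.
have sz' : (size ts + size us < n)%N by move: sz; rewrite /= addSn addnS ltnS.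
case: (leP x y) => xy.
  exact: (kl_step osc e0 IH xy sz' pt pu lst ct cu).
have sz2 : (size us + size ts < n)%N by rewrite addnC.
have [m [pm lm bm]] := kl_step osc e0 IH (ltW xy) sz2 pu pt (esym lst) cu ct.
by exists m; split => //; [rewrite lm | rewrite distrC].
Qed.


Lemma variation_cons c b g p s : c < p -> itv_partition p b s ->
  variation c b g (p :: s) = `|g p - g c| + variation p b g s.
Proof.
move=> cp ps.
have pb : p <= b by exact: itv_partition_le ps.
rewrite -cat1s (@variation_cat _ p) //; last exact: itv_partition1.
  by rewrite /variation /= big_nat_recr //= big_nil add0r.
exact: ltW.
Qed.

Lemma av_variation g c b m : path <=%R c m -> last c m = b ->
  exists s, itv_partition c b s /\ av g c m = variation c b g s.
Proof.
elim: m c => [|p m IH] c /=.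
  move=> _ <-; exists [::]; split; last by rewrite variation_nil.
  by split => //=.
move=> /andP[cp pm] lst; have [s [ps es]] := IH p pm lst.
have [ep|lt_cp] := eqVneq p c.
  subst p; exists s; split => //; by rewrite es subrr normr0 add0r.
have cp' : c < p by rewrite lt_neqAle eq_sym lt_cp cp.
exists (p :: s); split; last by rewrite variation_cons // es.
by case: ps => ps1 ps2; split => //=; rewrite cp' ps1.
Qed.

Lemma variation_le_TV g s : bounded_variation 0 1 g -> itv_partition 0 1 s ->
  variation 0 1 g s <= fine (total_variation 0 1 g).
Proof.
move=> bv ps.
have fin : total_variation 0 1 g \is a fin_num by apply/bounded_variationP.
rewrite -lee_fin fineK //; apply: ereal_sup_ubound => /=.
by exists (variation 0 1 g s) => //; exists s.
Qed.

Lemma av_le_TV g m : bounded_variation 0 1 g -> path <=%R 0 m -> last 0 m = 1 ->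
  av g 0 m <= fine (total_variation 0 1 g).
Proof.
move=> bv pm lm; have [s [ps ->]] := av_variation g pm lm.
exact: variation_le_TV.
Qed.

Lemma RS_zip A x c s xi : size xi = size s ->
  \sum_(i < size s) A (nth 0 xi i) * (x (nth 1 (c :: s) i.+1) - x (nth 1 (c :: s) i))
  = rs A x c (zip s xi).
Proof.
elim: s c xi => [|p s IH] c [|z xi] //=; first by rewrite big_ord0.
move=> [sz]; rewrite big_ord_recl /=; congr (_ + _).
exact: IH.
Qed.

Lemma close_zip d c s xi : size xi = size s -> itv_partition c 1 s -> 0 <= c ->
  (forall i, (i < size s)%N -> nth 1 (c :: s) i <= nth 0 xi i <= nth 1 (c :: s) i.+1) ->
  (forall i, (i < size s)%N -> nth 1 (c :: s) i.+1 - nth 1 (c :: s) i <= d) ->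
  close d c (zip s xi).
Proof.
elim: s c xi => [|p s IH] c [|z xi] //= [sz] ps c0 tg ms.
have ps' := itv_partition_cons ps.
have p1 : p <= 1 by exact: itv_partition_le ps'.
have := tg 0%N isT; have := ms 0%N isT => /= h1 /andP[cz zp].
split; [split|].
- apply/andP; split; [exact: le_trans c0 cz | exact: le_trans zp p1].
- move=> u /andP[cu up]; rewrite ler_norml; apply/andP; split; lra.
- apply: IH => //.
  + exact: le_trans c0 (le_trans cz zp).
  + by move=> i ilt; exact: (tg i.+1).
  + by move=> i ilt; exact: (ms i.+1).
Qed.

Fixpoint tg d c (ts : seq (R * R)) : Prop :=
  if ts is (p, xi) :: ts' then (c <= xi <= p) /\ p - c <= d /\ tg d p ts' else True.

Lemma tg_path d c ts : tg d c ts -> path <=%R c (map fst ts).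
Proof.
elim: ts c => [//|[p xi] ts IH] c /= [/andP[cx xp] [_ h]].
by rewrite (le_trans cx xp) IH.
Qed.

Lemma tg_close d c ts : 0 <= c -> tg d c ts -> last c (map fst ts) = 1 -> close d c ts.
Proof.
elim: ts c => [//|[p xi] ts IH] c /= c0 [/andP[cx xp] [pc h]] lst.
have p1 : p <= 1 by rewrite -lst; apply: path_le_last; exact: tg_path h.
split; [split|].
- apply/andP; split; [exact: le_trans c0 cx | exact: le_trans xp p1].
- move=> u /andP[cu up]; rewrite ler_norml; apply/andP; split; lra.
- apply: IH => //; exact: le_trans c0 (le_trans cx xp).
Qed.

Lemma tg_zip d c s xi : size xi = size s ->
  (forall i, (i < size s)%N -> nth 1 (c :: s) i <= nth 0 xi i <= nth 1 (c :: s) i.+1) ->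
  (forall i, (i < size s)%N -> nth 1 (c :: s) i.+1 - nth 1 (c :: s) i <= d) ->
  tg d c (zip s xi).
Proof.
elim: s c xi => [|p s IH] c [|z xi] //= [sz] tgs ms.
split; first exact: (tgs 0%N).
split; first exact: (ms 0%N).
apply: IH => //.
  by move=> i ilt; exact: (tgs i.+1).
by move=> i ilt; exact: (ms i.+1).
Qed.

Fixpoint tr c (ts : seq (R * R)) : seq (R * R) :=
  if ts is (p, xi) :: ts' then (xi, c) :: tr p ts' else [:: (c, c)].

Lemma sbp f g c e ts :
  rs f g c ts + rs g f e (tr c ts) =
  f (last c (map fst ts)) * g (last c (map fst ts)) - f e * g c.
Proof.
elim: ts c e => [|[p xi] ts IH] c e /=; first by ring.
have := IH p xi; lra.
Qed.

Lemma tr_ok d c e ts : 0 <= e -> e <= c -> c - e <= d -> tg d c ts ->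
  last c (map fst ts) = 1 ->
  [/\ path <=%R e (map fst (tr c ts)), last e (map fst (tr c ts)) = 1 &
      close d e (tr c ts)].
Proof.
elim: ts c e => [|[p xi] ts IH] c e /= e0 ec ced.
  move=> _ /= c1; split => //=; first by rewrite ec.
  split; [split; [apply/andP; split; lra | ] | by []].
  move=> u /andP[eu uc]; rewrite ler_norml; apply/andP; split; lra.
move=> [/andP[cx xp] [pc h]] lst.
have c1 : p <= 1 by rewrite -lst; apply: path_le_last; exact: tg_path h.
have pxd : p - xi <= d by lra.
have [IH1 IH2 IH3] := IH p xi (le_trans e0 (le_trans ec cx)) xp pxd h lst.
split => //.
- by rewrite (le_trans ec cx).
- split => //; split; first by apply/andP; split; lra.
  move=> u /andP[eu ux]; rewrite ler_norml; apply/andP; split; lra.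
Qed.

Lemma rs_addf f1 f2 g c ts : rs (f1 \+ f2) g c ts = rs f1 g c ts + rs f2 g c ts.
Proof. elim: ts c => [|[p xi] ts IH] c /=; [by rewrite addr0 | rewrite IH /=; ring]. Qed.

Lemma rs_addg f g1 g2 c ts : rs f (g1 \+ g2) c ts = rs f g1 c ts + rs f g2 c ts.
Proof. elim: ts c => [|[p xi] ts IH] c /=; [by rewrite addr0 | rewrite IH /=; ring]. Qed.

Lemma rs_scaleg f g k c ts : rs f (fun t => k * g t) c ts = k * rs f g c ts.
Proof. elim: ts c => [|[p xi] ts IH] c /=; [by rewrite mulr0 | rewrite IH /=; ring]. Qed.

Lemma rs_subf f1 f2 g c ts : rs (f1 \- f2) g c ts = rs f1 g c ts - rs f2 g c ts.
Proof. elim: ts c => [|[p xi] ts IH] c /=; [by rewrite subr0 | rewrite IH /=; ring]. Qed.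

Lemma rs_bound f g M d c ts : (forall t, 0 <= t <= 1 -> `|f t| <= M) ->
  close d c ts -> `|rs f g c ts| <= M * av g c (map fst ts).
Proof.
move=> fM; elim: ts c => [|[p xi] ts IH] c /=; first by rewrite normr0 mulr0.
move=> [[xi01 _] cl]; rewrite [in leRHS]mulrDr; apply: (le_trans (ler_normD _ _)).
apply: lerD; last exact: IH.
by rewrite normrM ler_wpM2r // fM.
Qed.



Lemma cont_eps (f : R -> R) x e : {within `[0, 1], continuous f} -> 0 <= x <= 1 -> 0 < e ->
  exists2 r, 0 < r & forall t, 0 <= t <= 1 -> `|x - t| < r -> `|f x - f t| < e.
Proof.
move=> /subspace_continuousP cf x01 e0.
have Kx : `[0, 1]%classic x by rewrite /= in_itv /=.
have := cf x Kx => /cvgrPdist_lt /(_ e e0).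
rewrite near_withinE => /nbhs_ballP [r /= r0 Hr].
exists r => // t t01 xt; apply: Hr.
  by rewrite /ball /=.
by rewrite /= in_itv /=.
Qed.

Lemma unif_cont (f : R -> R) : {within `[0, 1], continuous f} ->
  forall e, 0 < e -> exists2 d, 0 < d & forall t s, 0 <= t <= 1 -> 0 <= s <= 1 ->
    `|t - s| <= d -> `|f t - f s| <= e.
Proof.
move=> cf e e0.
have cpt := @segment_compact R 0 1.
move/compact_near_coveringP/near_covering_withinP : cpt => cov.
have := cov R (at_right (0:R)) (fun d x' => forall y, `[0, 1]%classic y ->
   `|x' - y| <= d -> `|f x' - f y| <= e) _.
case.
- move=> x Kx.
  have e20 : 0 < e / 2 by rewrite divr_gt0.
  have x01 : 0 <= x <= 1 by move: Kx; rewrite /= in_itv.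
  have [r r0 Hr] := cont_eps cf x01 e20.
  exists (ball x (r / 2) : set R, [set i : R | i < r / 2]).
    split => /=.
      by apply: nbhsx_ballx; rewrite divr_gt0.
      by apply: nbhs_right_lt; rewrite divr_gt0.
    move=> [x' i] /= [xx' ir] K1 y Ky x'y.
    have xx'2 : `|x - x'| < r / 2 by move: xx'; rewrite /ball /=.
    have K1' : 0 <= x' <= 1 by move: K1; rewrite /= in_itv.
    have Ky' : 0 <= y <= 1 by move: Ky; rewrite /= in_itv.
    have r2r : r / 2 < r by lra.
    have h1 := Hr x' K1' (lt_trans xx'2 r2r).
    have xy : `|x - y| < r.
      rewrite (_ : x - y = (x - x') + (x' - y)); last by ring.
      apply: (le_lt_trans (ler_normD _ _)).
      have : r / 2 + r / 2 = r by field.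
      move: xx'2 x'y ir; set a := `|x - x'|; set b := `|x' - y|; lra.
    have h2 := Hr y Ky' xy.
    rewrite (_ : f x' - f y = (f x - f y) - (f x - f x')); last by ring.
    apply: (le_trans (ler_normB _ _)).
    have : e / 2 + e / 2 = e by field.
    move: h1 h2; set a := `|f x - f x'|; set b := `|f x - f y|; lra.
- move=> d d0 H; exists (d / 2); first by rewrite divr_gt0.
  move=> t s t01 s01 ts.
  have := H (d / 2); apply => //.
  - by rewrite /ball /= sub0r normrN gtr0_norm ?divr_gt0 // ltr_pdivrMr // ltr_pMr // ltr1n.
  - by rewrite divr_gt0.
Qed.


Lemma exists_part (d : R) : 0 < d -> exists s xi,
  [/\ itv_partition 0 1 s, tags_ok s xi & mesh s < d].
Proof.
move=> d0.
set N := (Num.truncn d^-1).+1.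
have N0 : (0 < N%:R :> R) by rewrite ltr0n.
have Nd : N%:R^-1 < d.
  rewrite -[X in _ < X]invrK ltf_pV2 ?posrE ?invr_gt0 //.
  exact: truncnS_gt.
set F := fun k : nat => k%:R / (N%:R : R).
have F0 : F 0%N = 0 by rewrite /F mul0r.
have Fmono : forall m n, (m < n)%N -> F m < F n.
  by move=> m n mn; rewrite /F ltr_pM2r ?invr_gt0 // ltr_nat.
set s := [seq F k | k <- iota 1 N].
set xi := [seq F k | k <- iota 0 N].
have ptE : forall i, (i <= N)%N -> pt s i = F i.
  case=> [|i] iN; first by rewrite /pt /= F0.
  by rewrite /pt /= (nth_map 0%N) ?size_iota // nth_iota // add1n.
have sz : size s = N by rewrite size_map size_iota.
exists s, xi; split.
- split.
  + have : sorted <%R [seq F k | k <- iota 0 N.+1].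
      rewrite sorted_map; apply: (sub_sorted _ (iota_ltn_sorted 0 N.+1)).
      by move=> m n /= /Fmono.
    by rewrite /= F0.
  + apply/eqP; rewrite (last_nth 1) sz.
    have -> : nth 1 (0 :: s) N = pt s N by [].
    by rewrite ptE // /F divff // gt_eqF.
- split; first by rewrite /xi size_map size_iota sz.
  move=> i; rewrite sz => iN.
  rewrite ptE; last exact: ltnW.
  rewrite ptE // /xi (nth_map 0%N); last by rewrite size_iota.
  rewrite nth_iota // add0n.
  apply/andP; split; [exact: lexx | apply/ltW/Fmono; exact: ltnSn].
- apply: le_lt_trans Nd; rewrite /mesh sz; apply: bigmax_le.
    by rewrite invr_ge0 ltW.
  move=> i _; rewrite ptE // ptE; last exact: ltnW.
  by rewrite /F -mulrBl -natrB // subSnn mul1r.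
Qed.

Lemma tp_conv A x s xi d : itv_partition 0 1 s -> tags_ok s xi -> mesh s <= d ->
  [/\ RS_sum A x s xi = rs A x 0 (zip s xi), tg d 0 (zip s xi),
      map fst (zip s xi) = s & last 0 s = 1].
Proof.
move=> [ps /eqP ls] [sz tgs] md; split => //.
- by rewrite /RS_sum /pt; apply: RS_zip.
- apply: tg_zip => // i ilt; apply: (le_trans _ md).
  exact: (@le_bigmax _ R _ 0 (fun j : 'I_(size s) => pt s j.+1 - pt s j) (Ordinal ilt)).
- by apply: unzip1_zip; rewrite sz.
Qed.

Lemma tg_mono d d' c ts : d <= d' -> tg d c ts -> tg d' c ts.
Proof.
move=> dd'; elim: ts c => [//|[p xi] ts IH] c /= [h1 [h2 h3]].
by split => //; split; [exact: le_trans h2 dd' | exact: IH].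
Qed.

Definition CauchyC A x := forall eps, 0 < eps -> exists2 d, 0 < d &
  forall ts us, path <=%R 0 (map fst ts) -> path <=%R 0 (map fst us) ->
  last 0 (map fst ts) = 1 -> last 0 (map fst us) = 1 ->
  close d 0 ts -> close d 0 us -> `|rs A x 0 ts - rs A x 0 us| <= eps.

Definition CauchyT A x := forall eps, 0 < eps -> exists2 d, 0 < d &
  forall ts us, tg d 0 ts -> tg d 0 us -> last 0 (map fst ts) = 1 ->
  last 0 (map fst us) = 1 -> `|rs A x 0 ts - rs A x 0 us| <= eps.

Lemma CauchyCT A x : CauchyC A x -> CauchyT A x.
Proof.
move=> H eps e0; have [d d0 Hd] := H eps e0; exists d => // ts us tt tu lt lu.
apply: Hd => //; [exact: tg_path tt | exact: tg_path tu |
  exact: tg_close (lexx 0) tt lt | exact: tg_close (lexx 0) tu lu].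
Qed.

Definition unif_osc f := forall e, 0 < e -> exists2 D, 0 < D &
  forall t s, 0 <= t <= 1 -> 0 <= s <= 1 -> `|t - s| <= D -> `|f t - f s| <= e.

Lemma TV_ge0 g : 0 <= fine (total_variation 0 1 g).
Proof. by rewrite fine_ge0 // total_variation_ge0 // ler01. Qed.

Lemma cauchy_core f g eps d ts us :
  (forall t s, 0 <= t <= 1 -> 0 <= s <= 1 -> `|t - s| <= d + d -> `|f t - f s| <= eps) ->
  0 <= eps -> bounded_variation 0 1 g ->
  path <=%R 0 (map fst ts) -> path <=%R 0 (map fst us) ->
  last 0 (map fst ts) = 1 -> last 0 (map fst us) = 1 ->
  close d 0 ts -> close d 0 us ->
  `|rs f g 0 ts - rs f g 0 us| <= eps * fine (total_variation 0 1 g).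
Proof.
move=> osc e0 bv pt pu lt lu ct cu.
have := @kl f g eps d osc e0 (size ts + size us) ts us 0 (leqnn _) pt pu (etrans lt (esym lu)) ct cu.
case=> m [pm lm bm].
apply: (le_trans bm); apply: ler_wpM2l => //; apply: av_le_TV => //.
by rewrite lm.
Qed.

Lemma cauchy_fg f g : unif_osc f -> bounded_variation 0 1 g -> CauchyC f g.
Proof.
move=> uo bv eps e0.
set V := fine (total_variation 0 1 g).
have V0 : 0 <= V := TV_ge0 g.
have e1 : 0 < eps / (V + 1) by rewrite divr_gt0 // ltr_wpDl.
have [D D0 HD] := uo _ e1.
exists (D / 2); first by rewrite divr_gt0.
move=> ts us pt pu lt lu ct cu.
have osc : forall t s, 0 <= t <= 1 -> 0 <= s <= 1 -> `|t - s| <= D / 2 + D / 2 ->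
    `|f t - f s| <= eps / (V + 1).
  by move=> t s t01 s01 ts'; apply: HD => //; move: ts'; rewrite -splitr.
apply: (le_trans (cauchy_core osc (ltW e1) bv pt pu lt lu ct cu)).
rewrite -/V; apply: (@le_trans _ _ (eps / (V + 1) * (V + 1))).
  by rewrite ler_wpM2l ?(ltW e1) // lerDl.
by rewrite divfK // gt_eqF // ltr_wpDl.
Qed.

Lemma cauchy_bv f g : bounded_variation 0 1 f -> unif_osc g -> CauchyT f g.
Proof.
move=> bv uo eps e0.
have [d d0 Hd] := cauchy_fg uo bv e0.
exists d => // ts us tt tu lt lu.
have dd : (0:R) - 0 <= d by rewrite subrr ltW.
have [p1 l1 c1] := tr_ok (lexx 0) (lexx 0) dd tt lt.
have [p2 l2 c2] := tr_ok (lexx 0) (lexx 0) dd tu lu.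
have e1 := sbp f g 0 0 ts; have e2 := sbp f g 0 0 us.
rewrite lt in e1; rewrite lu in e2.
have -> : rs f g 0 ts - rs f g 0 us = rs g f 0 (tr 0 us) - rs g f 0 (tr 0 ts) by lra.
exact: Hd.
Qed.

End core.

Section rest2.
Context {R : realType}.
Implicit Types (f g : R -> R) (c d eps : R).

Lemma bv_A2 (A : R -> R) a : 0 < a -> a < 1 -> bounded_variation a 1 A ->
  bounded_variation 0 1 (fun t => if t < a then A a else A t).
Proof.
move=> a0 a1 bva; set A2 := fun t => _.
have cst : forall u, u <= a -> A2 u = A a.
  move=> u ua; rewrite /A2; case: ltP => // au.
  by have -> : u = a by apply/eqP; rewrite eq_le ua au.
have bv1 : bounded_variation 0 a A2.
  apply: nondecreasing_bounded_variation => u v.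
  rewrite !in_itv /= => /andP[_ ua] /andP[_ va] _.
  by rewrite !cst.
have bv2 : bounded_variation a 1 A2.
  case: bva => M HM; exists M => _ [l pl <-]; apply: HM; exists l => //.
  rewrite /variation; apply: eq_big_nat => n /andP[_ nl] /=.
  have h1 := itv_partition_nth_ge (ltnW nl) pl.
  have h2 := @itv_partition_nth_ge _ _ a 1 l n.+1 nl pl.
  have n1 : (nth 1 (a :: l) n.+1 < a) = false by rewrite ltNge h2.
  have n0 : (nth 1 (a :: l) n < a) = false by rewrite ltNge h1.
  by rewrite /A2 n1 n0.
have a01 : 0 <= a by exact: ltW.
apply/bounded_variationP => //.
rewrite (total_variationD _ a01 (ltW a1)) fin_numD.
by apply/andP; split; apply/bounded_variationP => //; exact: ltW.
Qed.


Lemma osc_A1 (A : R -> R) a e delta : 0 < a ->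
  (forall t s, 0 <= t <= a -> 0 <= s <= a -> 0 <= s - t <= delta ->
      forall tau sigma, t <= tau -> tau <= sigma -> sigma <= s ->
        `|A sigma - A tau| <= e) -> 0 <= e ->
  forall t s, 0 <= t <= 1 -> 0 <= s <= 1 -> `|t - s| <= delta ->
  `|(A \- (fun t => if t < a then A a else A t)) t -
    (A \- (fun t => if t < a then A a else A t)) s| <= e.
Proof.
move=> a0 Oe e0.
have key : forall t s, 0 <= t -> t <= s -> s - t <= delta ->
    `|(A \- (fun t => if t < a then A a else A t)) t -
      (A \- (fun t => if t < a then A a else A t)) s| <= e.
  move=> t s t0 ts std /=.
  case: (ltP t a) => ta; case: (ltP s a) => sa.
  - rewrite (_ : A t - A a - (A s - A a) = - (A s - A t)); last by ring.
    rewrite normrN.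
    have h1 : 0 <= t <= a by apply/andP; split; lra.
    have h2 : 0 <= s <= a by apply/andP; split; lra.
    have h3 : 0 <= s - t <= delta by apply/andP; split; lra.
    exact: (Oe t s h1 h2 h3 t s (lexx t) ts (lexx s)).
  - rewrite (_ : A t - A a - (A s - A s) = - (A a - A t)); last by ring.
    rewrite normrN.
    have h1 : 0 <= t <= a by apply/andP; split; lra.
    have h2 : 0 <= a <= a by apply/andP; split; lra.
    have h3 : 0 <= a - t <= delta by apply/andP; split; lra.
    exact: (Oe t a h1 h2 h3 t a (lexx t) (ltW ta) (lexx a)).
  - lra.
  - by rewrite !subrr normr0.
move=> t s /andP[t0 t1] /andP[s0 s1] tsd.
case: (leP t s) => ts.
  by apply: key => //; move: tsd; rewrite distrC ger0_norm // subr_ge0.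
rewrite distrC; apply: key => //; first exact: ltW.
by move: tsd; rewrite ger0_norm // subr_ge0 ltW.
Qed.

Lemma RS_bound (A z : R -> R) M I : (forall t, 0 <= t <= 1 -> `|A t| <= M) ->
  bounded_variation 0 1 z -> RS_integral_is A z I ->
  `|I| <= M * fine (total_variation 0 1 z).
Proof.
move=> AM bv HI.
have M0 : 0 <= M by apply: le_trans (AM 0 _); rewrite ?normr_ge0 // lexx ler01.
apply/ler_addgt0Pr => e e0.
have [d [d0 Hd]] := HI e e0.
have [s [xi [ps tgs md]]] := exists_part d0.
have [E tgz fz ls] := tp_conv A z ps tgs (lexx (mesh s)).
have := Hd s xi ps tgs md; rewrite E => h.
have lz : last 0 (map fst (zip s xi)) = 1 by rewrite fz.
have cl := tg_close (lexx 0) tgz lz.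
have hb := rs_bound z AM cl.
have hv : av z 0 (map fst (zip s xi)) <= fine (total_variation 0 1 z).
  by apply: av_le_TV => //; exact: (tg_path tgz).
rewrite (_ : I = (I - rs A z 0 (zip s xi)) + rs A z 0 (zip s xi)); last by ring.
apply: (le_trans (ler_normD _ _)); rewrite addrC; apply: lerD.
  exact: le_trans hb (ler_wpM2l M0 hv).
by rewrite distrC ltW.
Qed.


Lemma inv_nat_mono (n m : nat) : (n <= m)%N -> (m.+1%:R : R)^-1 <= (n.+1%:R)^-1.
Proof. by move=> nm; rewrite lef_pV2 ?posrE ?ltr0n // ler_nat ltnS. Qed.

Lemma inv_nat_lt (d : R) : 0 < d -> ((Num.truncn d^-1).+1%:R)^-1 < d.
Proof.
move=> d0; rewrite -[X in _ < X]invrK ltf_pV2 ?posrE ?invr_gt0 ?ltr0n //.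
exact: truncnS_gt.
Qed.

Lemma exists_int (A x : R -> R) : CauchyT A x -> exists I, RS_integral_is A x I.
Proof.
move=> CT.
have hp : forall n : nat, exists p : seq R * seq R,
    [/\ itv_partition 0 1 p.1, tags_ok p.1 p.2 & mesh p.1 < (n.+1%:R)^-1].
  move=> n; have n0 : (0 : R) < (n.+1%:R)^-1 by rewrite invr_gt0 ltr0n.
  have [s [xi H]] := exists_part n0; by exists (s, xi).
have [P HP] := choice hp.
pose u := fun n => RS_sum A x (P n).1 (P n).2.
have key : forall eps, 0 < eps -> exists N, forall n, (N <= n)%N -> forall s xi,
    itv_partition 0 1 s -> tags_ok s xi -> mesh s < (N.+1%:R)^-1 ->
    `|u n - RS_sum A x s xi| <= eps.
  move=> eps e0; have [d d0 Hd] := CT eps e0.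
  exists (Num.truncn d^-1) => n Nn s xi ps tgs ms.
  have Nd := inv_nat_lt d0.
  have [hn1 hn2 hn3] := HP n.
  have mn : mesh (P n).1 <= d.
    apply: ltW; apply: lt_le_trans hn3 _; apply: ltW; apply: le_lt_trans Nd.
    exact: inv_nat_mono.
  have [E1 t1 f1 l1] := tp_conv A x hn1 hn2 mn.
  have [E2 t2 f2 l2] := tp_conv A x ps tgs (ltW (lt_trans ms Nd)).
  rewrite /u E1 E2; apply: Hd => //; [rewrite f1 // | rewrite f2 //].
have cu : cvg (u @ \oo).
  apply/cauchy_cvgP/cauchy_exP => e e0.
  have e2 : 0 < e / 2 by rewrite divr_gt0.
  have [N HN] := key _ e2.
  exists (u N); exists N => // n /= Nn.
  have [hn1 hn2 hn3] := HP n.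
  have := HN N (leqnn N) _ _ hn1 hn2 (lt_le_trans hn3 (inv_nat_mono Nn)).
  rewrite /ball /= -/(u n) => h; apply: le_lt_trans h _.
  by rewrite ltr_pdivrMr // ltr_pMr // ltr1n.
exists (lim (u @ \oo)) => eps e0.
have e2 : 0 < eps / 2 by rewrite divr_gt0.
have [N HN] := key _ e2.
have := cu => /cvgrPdist_lt /(_ _ e2) [M _ HM].
exists ((N.+1%:R)^-1); split; first by rewrite invr_gt0 ltr0n.
move=> s xi ps tgs ms.
have h1 := HN (maxn N M) (leq_maxl N M) s xi ps tgs ms.
have h2 := HM (maxn N M) (leq_maxr N M).
rewrite (_ : RS_sum A x s xi - lim (u @ \oo) =
   - (u (maxn N M) - RS_sum A x s xi) - (lim (u @ \oo) - u (maxn N M))); last by ring.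
apply: (le_lt_trans (ler_normB _ _)); rewrite normrN.
rewrite (splitr eps); apply: ler_ltD => //.
Qed.


Lemma cauchy_omega (A x : R -> R) : Omega A -> bounded_variation 0 1 x ->
  unif_osc x -> CauchyT A x.
Proof.
move=> [_ OM] bvx uox eps e0.
set V := fine (total_variation 0 1 x).
have V0 : 0 <= V := TV_ge0 x.
have e2 : 0 < eps / 2 by rewrite divr_gt0.
have e1 : 0 < eps / 2 / (V + 1) by rewrite divr_gt0 // ltr_wpDl.
have [a [/andP[a0 a1] [[_ [delta [dpos Oe]]] bva]]] := OM _ e1.
set A2 := fun t => if t < a then A a else A t.
have bv2 : bounded_variation 0 1 A2 := bv_A2 a0 a1 bva.
have [d2 d20 H2] := cauchy_bv bv2 uox e2.
have osc1 : forall t s, 0 <= t <= 1 -> 0 <= s <= 1 ->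
    `|t - s| <= delta / 2 + delta / 2 -> `|(A \- A2) t - (A \- A2) s| <= eps / 2 / (V + 1).
  move=> t s t01 s01; rewrite -splitr; exact: (osc_A1 a0 Oe (ltW e1)).
have dl0 : 0 < delta / 2 by rewrite divr_gt0.
exists (Num.min d2 (delta / 2)); first by rewrite lt_min d20 dl0.
move=> ts us tt tu lt lu.
have md2 : Num.min d2 (delta / 2) <= d2 by rewrite ge_min lexx.
have mdl : Num.min d2 (delta / 2) <= delta / 2 by rewrite ge_min lexx orbT.
have P1 := rs_subf A A2 x 0 ts; have P2 := rs_subf A A2 x 0 us.
have -> : rs A x 0 ts - rs A x 0 us =
   (rs (A \- A2) x 0 ts - rs (A \- A2) x 0 us) + (rs A2 x 0 ts - rs A2 x 0 us) by lra.
rewrite (splitr eps); apply: (le_trans (ler_normD _ _)); apply: lerD; last first.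
  exact: (H2 ts us (tg_mono md2 tt) (tg_mono md2 tu) lt lu).
have tt' := tg_mono mdl tt; have tu' := tg_mono mdl tu.
apply: (le_trans (cauchy_core osc1 (ltW e1) bvx (tg_path tt') (tg_path tu') lt lu
   (tg_close (lexx 0) tt' lt) (tg_close (lexx 0) tu' lu))).
rewrite -/V; apply: (@le_trans _ _ (eps / 2 / (V + 1) * (V + 1))).
  by rewrite ler_wpM2l ?(ltW e1) // lerDl.
by rewrite divfK // gt_eqF // ltr_wpDl.
Qed.


Lemma bounded_cont (A : R -> R) : {within `[0, 1], continuous A} ->
  exists M, forall t, 0 <= t <= 1 -> `|A t| <= M.
Proof.
move=> cA.
have [c1 _ H1] := EVT_max ler01 cA.
have [c2 _ H2] := EVT_min ler01 cA.
exists (`|A c1| + `|A c2|) => t t01.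
have tin : t \in `[0, 1]%R by rewrite in_itv.
have h1 := H1 t tin; have h2 := H2 t tin.
rewrite ler_norml; apply/andP; split.
  have := ler_norm (- A c2); rewrite normrN.
  have := normr_ge0 (A c1); lra.
have := ler_norm (A c1); have := normr_ge0 (A c2); lra.
Qed.

Lemma bounded_bv (A : R -> R) : bounded_variation 0 1 A ->
  exists M, forall t, 0 <= t <= 1 -> `|A t| <= M.
Proof.
move=> bv; exists (`|A 0| + fine (total_variation 0 1 A)) => t /andP[t0 t1].
have hv : `|A t - A 0| <= fine (total_variation 0 1 A).
  case: (eqVneq t 0) => [->|tn0]; first by rewrite subrr normr0 TV_ge0.
  have t0' : 0 < t by rewrite lt_neqAle eq_sym tn0 t0.
  case: (eqVneq t 1) => [->|tn1].
    have := variation_le_TV bv (itv_partition1 ltr01).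
    by rewrite /variation /= big_nat_recr //= big_nil add0r.
  have t1' : t < 1 by rewrite lt_neqAle tn1 t1.
  have ps : itv_partition 0 1 [:: t; 1] by split => //=; rewrite t0' t1'.
  have := variation_le_TV bv ps.
  rewrite /variation /= !big_nat_recr //= big_nil add0r.
  have := normr_ge0 (A 1 - A t); lra.
rewrite (_ : A t = A 0 + (A t - A 0)); last by ring.
apply: (le_trans (ler_normD _ _)); exact: lerD.
Qed.

Lemma RS_add_int (A x y : R -> R) I J : RS_integral_is A x I -> RS_integral_is A y J ->
  RS_integral_is A (x \+ y) (I + J).
Proof.
move=> HI HJ eps e0.
have e2 : 0 < eps / 2 by rewrite divr_gt0.
have [d1 [d10 H1]] := HI _ e2; have [d2 [d20 H2]] := HJ _ e2.
exists (Num.min d1 d2); split; first by rewrite lt_min d10 d20.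
move=> s xi ps tgs ms; move: ms; rewrite lt_min => /andP[m1 m2].
have -> : RS_sum A (x \+ y) s xi = RS_sum A x s xi + RS_sum A y s xi.
  by rewrite /RS_sum -big_split; apply: eq_bigr => i _ /=; ring.
rewrite (_ : _ + _ - (I + J) = (RS_sum A x s xi - I) + (RS_sum A y s xi - J)); last by ring.
apply: (le_lt_trans (ler_normD _ _)); rewrite (splitr eps); apply: ltrD.
  exact: H1. exact: H2.
Qed.

Lemma RS_scale_int (A x : R -> R) c I : RS_integral_is A x I ->
  RS_integral_is A (fun t => c * x t) (c * I).
Proof.
move=> HI eps e0.
have e1 : 0 < eps / (`|c| + 1) by rewrite divr_gt0 // ltr_wpDl.
have [d [d0 H]] := HI _ e1.
exists d; split => // s xi ps tgs ms.
have -> : RS_sum A (fun t => c * x t) s xi = c * RS_sum A x s xi.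
  by rewrite /RS_sum mulr_sumr; apply: eq_bigr => i _ /=; ring.
rewrite -mulrBr normrM.
apply: (@le_lt_trans _ _ (`|c| * (eps / (`|c| + 1)))).
  by rewrite ler_wpM2l // ltW // H.
rewrite mulrA ltr_pdivrMr ?ltr_wpDl //.
have -> : eps * (`|c| + 1) = `|c| * eps + eps by ring.
by rewrite ltrDl.
Qed.

Lemma RS_unique (A x : R -> R) I J : RS_integral_is A x I -> RS_integral_is A x J -> I = J.
Proof.
move=> HI HJ; apply/eqP; rewrite -subr_eq0 -normr_le0; apply/ler_addgt0Pr => e e0.
rewrite add0r.
have e2 : 0 < e / 2 by rewrite divr_gt0.
have [d1 [d10 H1]] := HI _ e2; have [d2 [d20 H2]] := HJ _ e2.
have dm : 0 < Num.min d1 d2 by rewrite lt_min d10 d20.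
have [s [xi [ps tgs ms]]] := exists_part dm.
move: ms; rewrite lt_min => /andP[m1 m2].
have h1 := H1 s xi ps tgs m1; have h2 := H2 s xi ps tgs m2.
rewrite (_ : I - J = - (RS_sum A x s xi - I) + (RS_sum A x s xi - J)); last by ring.
apply: (le_trans (ler_normD _ _)); rewrite normrN (splitr e); apply: lerD; exact: ltW.
Qed.

Lemma RS_sub_int (A x y : R -> R) I J : RS_integral_is A y J -> RS_integral_is A x I ->
  RS_integral_is A (y \- x) (J - I).
Proof.
move=> HJ HI eps e0.
have e2 : 0 < eps / 2 by rewrite divr_gt0.
have [d1 [d10 H1]] := HI _ e2; have [d2 [d20 H2]] := HJ _ e2.
exists (Num.min d1 d2); split; first by rewrite lt_min d10 d20.
move=> s xi ps tgs ms; move: ms; rewrite lt_min => /andP[m1 m2].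
have -> : RS_sum A (y \- x) s xi = RS_sum A y s xi - RS_sum A x s xi.
  by rewrite /RS_sum -sumrB; apply: eq_bigr => i _ /=; ring.
rewrite (_ : _ - _ - (J - I) = (RS_sum A y s xi - J) - (RS_sum A x s xi - I)); last by ring.
apply: (le_lt_trans (ler_normB _ _)); rewrite (splitr eps); apply: ltrD.
  exact: H2. exact: H1.
Qed.

End rest2.

Unset Implicit Arguments.

Theorem corollary4p13 (R : realType) (A : R -> R) :
  Omega_hat A ->
  exists L : (R -> R) -> R,
    (forall x, CBV x -> RS_integral_is A x (L x)) /\
    (forall x y, CBV x -> CBV y -> L (x \+ y) = L x + L y) /\
    (forall (c : R) x, CBV x -> L (fun t => c * x t) = c * L x) /\
    (forall x, CBV x -> forall eps : R, 0 < eps -> exists delta : R, 0 < delta /\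
       forall y, CBV y -> bv_norm (y \- x) < delta -> `|L y - L x| < eps).
Proof.
move=> hA.
have [M HM] : exists M, forall t, 0 <= t <= 1 -> `|A t| <= M.
  case: hA => [[[M HM] _]|[cA|bA]]; [by exists M | exact: bounded_cont | exact: bounded_bv].
have M0 : 0 <= M by apply: le_trans (HM 0 _); rewrite ?normr_ge0 // lexx ler01.
have ex : forall x, CBV x -> exists I, RS_integral_is A x I.
  move=> x [cx bx]; apply: exists_int.
  have ux : unif_osc x := unif_cont cx.
  case: hA => [oA|[cA|bA]].
  - exact: cauchy_omega.
  - exact: CauchyCT (cauchy_fg (unif_cont cA) bx).
  - exact: cauchy_bv bA ux.
pose L := fun x => xget 0 [set I | RS_integral_is A x I].
have LP : forall x, CBV x -> RS_integral_is A x (L x).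
  by move=> x cx; exact: (xgetPex 0 (ex x cx)).
have LU : forall x I, RS_integral_is A x I -> L x = I.
  move=> x I HI; apply: (RS_unique _ HI); exact: (xgetPex 0 (ex_intro _ I HI)).
exists L; split; first exact: LP.
split.
  by move=> x y cx cy; apply: LU; exact: RS_add_int (LP x cx) (LP y cy).
split.
  by move=> c x cx; apply: LU; exact: RS_scale_int (LP x cx).
move=> x cx eps e0.
have e1 : 0 < eps / (M + 1) by rewrite divr_gt0 // ltr_wpDl.
exists (eps / (M + 1)); split => // y cy hb.
have Hyx := RS_sub_int (LP y cy) (LP x cx).
have bvyx : bounded_variation 0 1 (y \- x).
  apply: bounded_variationD => //.
    by case: cy.
  by apply: bounded_variationN; case: cx.
have := RS_bound HM bvyx Hyx => hI.
apply: (le_lt_trans hI).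
apply: (@le_lt_trans _ _ (M * (eps / (M + 1)))).
  apply: ler_wpM2l => //; apply: ltW; apply: le_lt_trans hb.
  by rewrite /bv_norm lerDr normr_ge0.
rewrite mulrA ltr_pdivrMr ?ltr_wpDl //.
have -> : eps * (M + 1) = M * eps + eps by ring.
by rewrite ltrDl.
Qed.
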